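(* Let $\mathcal P\subseteq\mathcal G$ be a pseudo-torsion class and $\mathcal Q=\mathcal P^\perp$. For every $M\in\mathcal G$ there is a unique strict subobject $tM$ of $M$ such that $tM\in\mathcal P$ and $fM:=M/tM\in\mathcal Q$; thus $0\to tM\to M\to fM\to 0$ is a strict exact sequence. Moreover, for every strict morphism $\varphi:M\to N$ with $M,N\in\mathcal G$, $\varphi(tM)\subseteq tN$, and the induced maps $tM\to tN$ and $fM\to fN$ are strict morphisms making the evident diagram with the two strict exact sequences commute.
   Context: Let $\Lambda$ be a finite dimensional algebra over a field and $\mathrm{mod}\text-\Lambda$ the category of finitely generated right $\Lambda$-modules. Fix a torsion class $\mathcal G\subseteq\mathrm{mod}\text-\Lambda$, i.e. a class of modules closed under isomorphisms, extensions and quotients. For $B\in\mathcal G$, a subobject of $B$ is a submodule of $B$ that lies in $\mathcal G$. A subobject $A\subseteq B$ is a strict subobject if $A\cap B'\in\mathcal G$ for every subobject $B'$ of $B$. A strict quotient of $B$ is $B/A$ with $A$ a strict subobject. A short exact sequence $0\to A\to B\to C\to0$ with $A,B,C\in\mathcal G$ is strict exact (and $B$ a strict extension of $A$ by $C$) if the image of $A$ is a strict subobject of $B$. A strict morphism is a homomorphism $f:A\to B$ with $A,B\in\mathcal G$ such that $\ker f\in\mathcal G$ is a strict subobject of $A$ and $\operatorname{im} f$ is a strict subobject of $B$. A pseudo-torsion class is a nonempty class $\mathcal P\subseteq\mathcal G$ closed under strict quotients and strict extensions. For $\mathcal X\subseteq\mathcal G$, $\mathcal X^\perp$ is the class of $Y\in\mathcal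 G$ such that every strict morphism $X\to Y$ with $X\in\mathcal X$ is zero. *)

(* Defs.v *)
(* Right modules over a finite dimensional algebra are
   represented concretely: a finitely generated right Lam-module is a
   finite dimensional F-vector space F^n (row vectors) together with the
   matrices of the right action of the elements of Lam. *)
From HB Require Import structures.
From mathcomp Require Import all_boot all_order all_algebra.
From mathcomp Require Import falgebra.
Set Implicit Arguments. Unset Strict Implicit. Unset Printing Implicit Defensive.
Import GRing.Theory.
Local Open Scope ring_scope.

Section Modules.
Variables (F : fieldType) (Lam : falgType F).

(* A (candidate) module: dimension and action matrices; row vector v acts
   as v *m ract M a. *)
Record rmod := RMod { rdim : nat; ract : Lam -> 'M[F]_rdim }.

Definition valid (M : rmod) : Prop :=
  [/\ forall (c : F) (a b : Lam), ract M (c *: a + b) = c *: ract M a + ract M b,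
      ract M 1 = 1%:M
    & forall a b : Lam, ract M (a * b) = ract M a *m ract M b].

Definition is_hom (M N : rmod) (f : 'M[F]_(rdim M, rdim N)) : Prop :=
  forall a : Lam, ract M a *m f = f *m ract N a.

Definition is_iso (M N : rmod) (f : 'M[F]_(rdim M, rdim N)) : Prop :=
  is_hom f /\ row_free f /\ row_full f.

Definition short_exact (A B C : rmod)
    (f : 'M[F]_(rdim A, rdim B)) (g : 'M[F]_(rdim B, rdim C)) : Prop :=
  [/\ is_hom f, is_hom g, row_free f, row_full g & (f == kermx g)%MS].

Definition mclass := rmod -> Prop.

Definition torsion_class (G : mclass) : Prop :=
  [/\ (forall M, G M -> valid M),
      (forall M N (f : 'M[F]_(rdim M, rdim N)), G M -> valid N -> is_iso f -> G N),
      (forall A B C (f : 'M[F]_(rdim A, rdim B)) (g : 'M[F]_(rdim B, rdim C)),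
          G A -> G C -> valid B -> short_exact f g -> G B)
    & (forall M N (g : 'M[F]_(rdim M, rdim N)),
          G M -> valid N -> is_hom g -> row_full g -> G N)].

(* A submodule U of M (given by the row space of U) is realized by X via the
   injective homomorphism e with image U. *)
Definition sub_real (M : rmod) k (U : 'M[F]_(k, rdim M))
    (X : rmod) (e : 'M[F]_(rdim X, rdim M)) : Prop :=
  [/\ valid X, is_hom e, row_free e & (e == U)%MS].

Definition quot_real (M : rmod) k (U : 'M[F]_(k, rdim M))
    (Y : rmod) (p : 'M[F]_(rdim M, rdim Y)) : Prop :=
  [/\ valid Y, is_hom p, row_full p & (kermx p == U)%MS].

Definition sub_in (C : mclass) (M : rmod) k (U : 'M[F]_(k, rdim M)) : Prop :=
  exists (X : rmod) (e : 'M[F]_(rdim X, rdim M)), sub_real U e /\ C X.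

Definition quot_in (C : mclass) (M : rmod) k (U : 'M[F]_(k, rdim M)) : Prop :=
  exists (Y : rmod) (p : 'M[F]_(rdim M, rdim Y)), quot_real U p /\ C Y.

Section Strict.
Variable G : mclass.

Definition subobject (B : rmod) k (A : 'M[F]_(k, rdim B)) : Prop := sub_in G A.

Definition strict_sub (B : rmod) k (A : 'M[F]_(k, rdim B)) : Prop :=
  subobject A /\
  forall k' (B' : 'M[F]_(k', rdim B)), subobject B' -> sub_in G (A :&: B')%MS.

Definition strict_exact (A B C : rmod)
    (f : 'M[F]_(rdim A, rdim B)) (g : 'M[F]_(rdim B, rdim C)) : Prop :=
  [/\ G A, G B, G C, short_exact f g & strict_sub f].

Definition strict_morphism (A B : rmod) (f : 'M[F]_(rdim A, rdim B)) : Prop :=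
  [/\ G A, G B, is_hom f, strict_sub (kermx f) & strict_sub f].

Definition pseudo_torsion (P : mclass) : Prop :=
  [/\ (forall M, P M -> G M),
      (exists M, P M),
      (forall B N (g : 'M[F]_(rdim B, rdim N)),
          P B -> valid N -> is_hom g -> row_full g -> strict_sub (kermx g) -> P N)
    & (forall A B C (f : 'M[F]_(rdim A, rdim B)) (g : 'M[F]_(rdim B, rdim C)),
          P A -> P C -> strict_exact f g -> P B)].

Definition perp (X : mclass) : mclass := fun Y =>
  G Y /\ forall A (f : 'M[F]_(rdim A, rdim Y)), X A -> strict_morphism f -> f = 0.

Definition torsion_part (P : mclass) (M : rmod) k (U : 'M[F]_(k, rdim M)) : Prop :=
  [/\ strict_sub U, sub_in P U & quot_in (perp P) U].

End Strict.
End Modules.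

(* Main.v *)
Require Import Defs.
From HB Require Import structures.
From mathcomp Require Import all_boot all_order all_algebra.
From mathcomp Require Import falgebra zify.
From Stdlib Require Import Classical_Prop.
Import GRing.Theory.
Local Open Scope ring_scope.
Set Implicit Arguments. Unset Strict Implicit. Unset Printing Implicit Defensive.

Section MxFacts.
Variable F : fieldType.

Definition pre m n k (f : 'M[F]_(m, n)) (D : 'M[F]_(k, n)) : 'M[F]_m :=
  kermx (f *m cokermx D).

Lemma sub_pre m n k j (f : 'M[F]_(m, n)) (D : 'M[F]_(k, n)) (x : 'M[F]_(j, m)) :
  (x <= pre f D)%MS = (x *m f <= D)%MS.
Proof. by rewrite /pre sub_kermx mulmxA submxE. Qed.

Lemma pre_img m n k (f : 'M[F]_(m, n)) (D : 'M[F]_(k, n)) : (pre f D *m f <= D)%MS.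
Proof. by rewrite -sub_pre. Qed.

Lemma ker_pre m n k (f : 'M[F]_(m, n)) (D : 'M[F]_(k, n)) : (kermx f <= pre f D)%MS.
Proof. by rewrite sub_pre mulmx_ker sub0mx. Qed.

Lemma pre_imgE m n k (f : 'M[F]_(m, n)) (D : 'M[F]_(k, n)) :
  (D <= f)%MS -> (pre f D *m f == D)%MS.
Proof.
move=> /submxP[Z ->]; rewrite pre_img /=.
by apply: submxMr; rewrite sub_pre.
Qed.

Lemma pre_cap m n k1 k2 (f : 'M[F]_(m, n)) (D1 : 'M[F]_(k1, n)) (D2 : 'M[F]_(k2, n)) :
  (pre f (D1 :&: D2) == pre f D1 :&: pre f D2)%MS.
Proof.
apply/andP; split.
  by rewrite sub_capmx !sub_pre !(submx_trans (pre_img _ _)) ?capmxSl ?capmxSr.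
by rewrite sub_pre sub_capmx -!sub_pre capmxSl capmxSr.
Qed.

Lemma pre_mono m n k1 k2 (f : 'M[F]_(m, n)) (D1 : 'M[F]_(k1, n)) (D2 : 'M[F]_(k2, n)) :
  (D1 <= D2)%MS -> (pre f D1 <= pre f D2)%MS.
Proof. by move=> s; rewrite sub_pre (submx_trans (pre_img _ _)). Qed.

Lemma pre_eq m n k1 k2 (f : 'M[F]_(m, n)) (D1 : 'M[F]_(k1, n)) (D2 : 'M[F]_(k2, n)) :
  (D1 == D2)%MS -> (pre f D1 == pre f D2)%MS.
Proof. by case/andP=> a b; rewrite !pre_mono. Qed.

Lemma img_cap m n k j (f : 'M[F]_(m, n)) (D : 'M[F]_(k, n)) (B : 'M[F]_(j, m)) :
  ((pre f D :&: B) *m f == D :&: B *m f)%MS.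
Proof.
apply/andP; split.
  rewrite sub_capmx; apply/andP; split.
    by apply: submx_trans (pre_img f D); rewrite submxMr ?capmxSl.
  by rewrite submxMr ?capmxSr.
have /submxP[Z hZ] : ((D :&: B *m f) <= B *m f)%MS by rewrite capmxSr.
rewrite hZ mulmxA submxMr // sub_capmx submxMl andbT sub_pre.
by rewrite -mulmxA -hZ capmxSl.
Qed.

Lemma ker_comp m n p (e : 'M[F]_(m, n)) (q : 'M[F]_(n, p)) :
  (kermx (e *m q) *m e == e :&: kermx q)%MS.
Proof.
apply/andP; split.
  rewrite sub_capmx; apply/andP; split; first exact: submxMl.
  by apply/sub_kermxP; rewrite -mulmxA mulmx_ker.
set x := (e :&: kermx q)%MS.
have /submxP[D hD] : (x <= e)%MS by rewrite capmxSl.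
rewrite hD submxMr // sub_kermx mulmxA -hD.
by apply/eqP/sub_kermxP; rewrite capmxSr.
Qed.

Lemma ker_pre_comp m n p k (f : 'M[F]_(m, n)) (q : 'M[F]_(n, p)) (V : 'M[F]_(k, n)) :
  (kermx q == V)%MS -> (kermx (f *m q) == pre f V)%MS.
Proof.
move=> /andP[a b]; apply/andP; split.
  by rewrite sub_pre (submx_trans _ a) // sub_kermx -mulmxA mulmx_ker.
rewrite sub_kermx mulmxA; apply/eqP/sub_kermxP.
by rewrite (submx_trans (pre_img _ _)).
Qed.

Lemma cap_free n p k1 k2 (e : 'M[F]_(n, p)) (A : 'M[F]_(k1, n)) (B : 'M[F]_(k2, n)) :
  row_free e -> ((A :&: B) *m e == (A *m e) :&: (B *m e))%MS.
Proof.
move=> fe; rewrite capmxMr /=.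
have /submxP[D hD] : ((A *m e) :&: (B *m e) <= A *m e)%MS by rewrite capmxSl.
have /submxP[D' hD'] : ((A *m e) :&: (B *m e) <= B *m e)%MS by rewrite capmxSr.
have E : D *m A = D' *m B.
  by apply: (row_free_inj fe); rewrite -!mulmxA -hD -hD'.
by rewrite hD mulmxA submxMr // sub_capmx submxMl E submxMl.
Qed.

Lemma free_of_mul m n p (f : 'M[F]_(m, n)) (e : 'M[F]_(n, p)) :
  row_free (f *m e) -> row_free f.
Proof.
rewrite /row_free => /eqP h; rewrite eqn_leq rank_leq_row /= -{1}h.
exact: mxrankM_maxl.
Qed.

Lemma full_of_fact m n p (g : 'M[F]_(m, n)) (e : 'M[F]_(n, p)) (e' : 'M[F]_(m, p)) :
  row_free e -> g *m e = e' -> (e <= e')%MS -> row_full g.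
Proof.
move=> fe ge /submxP[w hw]; apply/row_fullP; exists w.
apply: (row_free_inj fe); by rewrite mul1mx -mulmxA ge -hw.
Qed.

Lemma mxeq_refl m n (A : 'M[F]_(m, n)) : (A == A)%MS.
Proof. by rewrite submx_refl. Qed.

Lemma mxeq_sym m1 m2 n (A : 'M[F]_(m1, n)) (B : 'M[F]_(m2, n)) : (A == B)%MS -> (B == A)%MS.
Proof. by case/andP=> a b; rewrite a b. Qed.

Lemma mxeq_trans m1 m2 m3 n (A : 'M[F]_(m1, n)) (B : 'M[F]_(m2, n)) (C : 'M[F]_(m3, n)) :
  (A == B)%MS -> (B == C)%MS -> (A == C)%MS.
Proof. by case/andP=> a b /andP[c d]; rewrite (submx_trans a c) (submx_trans d b). Qed.

End MxFacts.

Section Mods.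
Variables (F : fieldType) (Lam : falgType F).
Local Notation rmod := (rmod Lam).

Definition stab (M : rmod) k (U : 'M[F]_(k, rdim M)) :=
  forall a, (U *m ract M a <= U)%MS.

Lemma hom_comp (X M N : rmod) (f : 'M[F]_(rdim X, rdim M)) (g : 'M[F]_(rdim M, rdim N)) :
  is_hom f -> is_hom g -> is_hom (f *m g).
Proof. by move=> hf hg a; rewrite mulmxA hf -!mulmxA hg. Qed.

Lemma hom_id (M : rmod) : is_hom (1%:M : 'M[F]_(rdim M)).
Proof. by move=> a; rewrite mulmx1 mul1mx. Qed.

Lemma valid_free (X M : rmod) (e : 'M[F]_(rdim X, rdim M)) :
  valid M -> is_hom e -> row_free e -> valid X.
Proof.
move=> [hl h1 hm] he fe; split.
- move=> c a b; apply: (row_free_inj fe).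
  by rewrite he hl mulmxDr mulmxDl -scalemxAl !he scalemxAr.
- by apply: (row_free_inj fe); rewrite he h1 mulmx1 mul1mx.
- by move=> a b; apply: (row_free_inj fe); rewrite he hm mulmxA -he -!mulmxA he.
Qed.

Lemma valid_full (M Y : rmod) (p : 'M[F]_(rdim M, rdim Y)) :
  valid M -> is_hom p -> row_full p -> valid Y.
Proof.
move=> [hl h1 hm] hp fp; split.
- move=> c a b; apply: (row_full_inj fp).
  by rewrite -hp hl mulmxDl mulmxDr -scalemxAl !hp scalemxAr.
- by apply: (row_full_inj fp); rewrite -hp h1 mulmx1 mul1mx.
- by move=> a b; apply: (row_full_inj fp); rewrite -hp hm -mulmxA hp !mulmxA hp.
Qed.

Lemma stab_img (M N : rmod) k (U : 'M[F]_(k, rdim M)) (f : 'M[F]_(rdim M, rdim N)) :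
  stab U -> is_hom f -> stab (U *m f).
Proof. by move=> sU hf a; rewrite -mulmxA -hf mulmxA submxMr. Qed.

Lemma stab_pre (M N : rmod) k (D : 'M[F]_(k, rdim N)) (f : 'M[F]_(rdim M, rdim N)) :
  stab D -> is_hom f -> stab (pre f D).
Proof.
move=> sD hf a; rewrite sub_pre -mulmxA hf mulmxA.
exact: submx_trans (submxMr _ (pre_img _ _)) (sD a).
Qed.

Lemma stab_cap (M : rmod) k1 k2 (U : 'M[F]_(k1, rdim M)) (V : 'M[F]_(k2, rdim M)) :
  stab U -> stab V -> stab (U :&: V)%MS.
Proof.
move=> sU sV a; rewrite sub_capmx.
by rewrite (submx_trans (submxMr _ (capmxSl _ _)) (sU a))
           (submx_trans (submxMr _ (capmxSr _ _)) (sV a)).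
Qed.

Lemma stab_eq (M : rmod) k1 k2 (U : 'M[F]_(k1, rdim M)) (V : 'M[F]_(k2, rdim M)) :
  (U == V)%MS -> stab U -> stab V.
Proof.
move=> /andP[a b] sU x.
exact: submx_trans (submxMr _ b) (submx_trans (sU x) a).
Qed.

Lemma stab_hom (X M : rmod) (e : 'M[F]_(rdim X, rdim M)) : is_hom e -> stab e.
Proof. by move=> he a; rewrite -he submxMl. Qed.

Lemma sub_real_stab (M X : rmod) k (U : 'M[F]_(k, rdim M)) (e : 'M[F]_(rdim X, rdim M)) :
  sub_real U e -> stab U.
Proof. by move=> [_ he _ eq]; apply: stab_eq eq (stab_hom he). Qed.

Lemma sub_in_stab (C : mclass Lam) (M : rmod) k (U : 'M[F]_(k, rdim M)) :
  sub_in C U -> stab U.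
Proof. by move=> [X [e [r _]]]; exact: sub_real_stab r. Qed.

Lemma sub_exists (M : rmod) k (U : 'M[F]_(k, rdim M)) :
  valid M -> stab U -> exists (X : rmod) (e : 'M[F]_(rdim X, rdim M)), sub_real U e.
Proof.
move=> vM sU.
pose X := @RMod F Lam (\rank U)
  (fun a => row_base U *m ract M a *m pinvmx (row_base U)).
exists X, (row_base U).
have he : is_hom (M := X) (N := M) (row_base U).
  move=> a /=; rewrite mulmxKpV //.
  rewrite (eqmxMr _ (eq_row_base U)) eq_row_base; exact: sU.
split=> //; first exact: valid_free vM he (row_base_free U).
- exact: row_base_free.
- by apply/eqmxP; exact: eq_row_base.
Qed.

Lemma quot_exists (M : rmod) k (U : 'M[F]_(k, rdim M)) :
  valid M -> stab U -> exists (Y : rmod) (p : 'M[F]_(rdim M, rdim Y)), quot_real U p.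
Proof.
move=> vM sU.
pose K := kermx U^T.
pose q := (row_base K)^T.
have Uq : U *m q = 0.
  rewrite /q -[U]trmxK -trmx_mul; apply/eqP; rewrite trmx_eq0; apply/eqP.
  by apply/sub_kermxP; rewrite eq_row_base.
have rq : \rank q = \rank K by rewrite /q mxrank_tr; apply: eqmx_rank; apply/eqmxP; exact: eq_row_base.
have fq : row_full q by rewrite /row_full rq.
have kq : (kermx q == U)%MS.
  have sUk : (U <= kermx q)%MS by apply/sub_kermxP.
  have rk : \rank (kermx q) = \rank U.
    rewrite mxrank_ker rq.
    have -> : \rank K = (rdim M - \rank U)%N by rewrite /K mxrank_ker mxrank_tr.
    by rewrite subKn ?rank_leq_col.
  have := mxrank_leqif_eq sUk; rewrite rk => /leqif_refl h.
  apply/andP; split; last exact: sUk.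
  by case/andP: h.
pose Y := @RMod F Lam (\rank K) (fun a => pinvmx q *m ract M a *m q).
exists Y, q.
have hq : is_hom (M := M) (N := Y) q.
  move=> a /=.
  have s1 : ((1%:M - q *m pinvmx q) <= kermx q)%MS.
    by apply/sub_kermxP; rewrite mulmxBl mul1mx mulmxKpV // subrr.
  have s2 : ((1%:M - q *m pinvmx q) *m ract M a <= kermx q)%MS.
    case/andP: kq => k1 k2.
    exact: submx_trans (submx_trans (submxMr _ (submx_trans s1 k1)) (sU a)) k2.
  move/sub_kermxP: s2; rewrite mulmxBl mul1mx mulmxBl => /eqP.
  by rewrite subr_eq0 => /eqP ->; rewrite !mulmxA.
split=> //; exact: valid_full vM hq fq.
Qed.

Lemma sub_eq (C : mclass Lam) (M : rmod) k1 k2 (U : 'M[F]_(k1, rdim M)) (V : 'M[F]_(k2, rdim M)) :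
  (U == V)%MS -> sub_in C U -> sub_in C V.
Proof.
move=> eUV [X [e [[vX he fe eq] cX]]]; exists X, e; split=> //; split=> //.
by apply/eqmxP; apply: eqmx_trans (eqmxP eq) (eqmxP eUV).
Qed.

Lemma cap_eql (M : rmod) k1 k2 k3 (U : 'M[F]_(k1, rdim M)) (V : 'M[F]_(k2, rdim M))
   (W : 'M[F]_(k3, rdim M)) :
  (U == V)%MS -> (U :&: W == V :&: W)%MS.
Proof. by case/andP=> a b; rewrite !capmxS. Qed.

Lemma strict_eq (G : mclass Lam) (M : rmod) k1 k2 (U : 'M[F]_(k1, rdim M)) (V : 'M[F]_(k2, rdim M)) :
  (U == V)%MS -> strict_sub G U -> strict_sub G V.
Proof.
move=> eUV [sU hU]; split; first exact: sub_eq eUV sU.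
by move=> k' B' sB; apply: sub_eq (cap_eql _ eUV) (hU _ _ sB).
Qed.

Lemma factor (X Z M : rmod) (e : 'M[F]_(rdim X, rdim M)) (e2 : 'M[F]_(rdim Z, rdim M)) :
  is_hom e -> is_hom e2 -> row_free e2 -> (e <= e2)%MS ->
  is_hom (e *m pinvmx e2) /\ e *m pinvmx e2 *m e2 = e.
Proof.
move=> he he2 fe ee; have E := mulmxKpV ee; split=> // a.
set g := pinvmx e2 in E *.
apply: (row_free_inj fe).
have -> : ract X a *m (e *m g) *m e2 = ract X a *m e by rewrite -mulmxA E.
by rewrite -[RHS]mulmxA he2 mulmxA E he.
Qed.

End Mods.

Section GLemmas.
Variables (F : fieldType) (Lam : falgType F) (G : mclass Lam).
Hypothesis HG : torsion_class G.
Local Notation rmod := (rmod Lam).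

Lemma Gvalid (M : rmod) : G M -> valid M.
Proof. by case: HG => h _ _ _; exact: h. Qed.

Lemma Gquot (M N : rmod) (g : 'M[F]_(rdim M, rdim N)) :
  G M -> valid N -> is_hom g -> row_full g -> G N.
Proof. by case: HG => _ _ _ h; exact: h. Qed.

Lemma G_of_real (M X : rmod) k (U : 'M[F]_(k, rdim M)) (e : 'M[F]_(rdim X, rdim M)) :
  sub_real U e -> sub_in G U -> G X.
Proof.
move=> [vX he fe eU] [X0 [e0 [[vX0 he0 fe0 eU0] GX0]]].
have ee : (e0 <= e)%MS.
  by case/andP: eU0 => a _; case/andP: eU => _ b; exact: submx_trans a b.
have [hg E] := factor he0 he fe ee.
apply: (Gquot GX0 vX hg); apply: full_of_fact fe E _.
by case/andP: eU => a _; case/andP: eU0 => _ b; exact: submx_trans a b.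
Qed.

Lemma img_G (M N : rmod) k (A : 'M[F]_(k, rdim M)) (f : 'M[F]_(rdim M, rdim N)) :
  valid N -> is_hom f -> sub_in G A -> sub_in G (A *m f).
Proof.
move=> vN hf [X [e [[vX he fe eA] GX]]].
have sA : stab A by apply: sub_real_stab (And4 vX he fe eA).
have [Z [e2 r2]] := sub_exists vN (stab_img sA hf).
case: r2 => vZ he2 fe2 eA2.
have efA : (e *m f == A *m f)%MS by case/andP: eA => a b; rewrite !submxMr.
have ee : (e *m f <= e2)%MS.
  by case/andP: efA => a _; case/andP: eA2 => _ b; exact: submx_trans a b.
have [hg E] := factor (hom_comp he hf) he2 fe2 ee.
exists Z, e2; split; first by split.
apply: (Gquot GX vZ hg); apply: full_of_fact fe2 E _.
by case/andP: eA2 => a _; case/andP: efA => _ b; exact: submx_trans a b.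
Qed.

Lemma ses (M N X A C : rmod) (q : 'M[F]_(rdim M, rdim N))
  k1 k2 k3 (V : 'M[F]_(k1, rdim M)) (Va : 'M[F]_(k2, rdim M)) (Vc : 'M[F]_(k3, rdim N))
  (e : 'M[F]_(rdim X, rdim M)) (ea : 'M[F]_(rdim A, rdim M)) (ec : 'M[F]_(rdim C, rdim N)) :
  is_hom q -> sub_real V e -> sub_real Va ea -> sub_real Vc ec ->
  (Va == V :&: kermx q)%MS -> (Vc == V *m q)%MS ->
  short_exact (ea *m pinvmx e) (e *m q *m pinvmx ec).
Proof.
move=> hq [vX he fe eV] [vA hea fea eVa] [vC hec fec eVc] Ea Ec.
have eaV : (ea <= e)%MS.
  case/andP: eVa => a _; case/andP: Ea => b _; case/andP: eV => _ c.
  exact: submx_trans a (submx_trans b (submx_trans (capmxSl _ _) c)).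
have eaK : (ea <= kermx q)%MS.
  case/andP: eVa => a _; case/andP: Ea => b _.
  exact: submx_trans a (submx_trans b (capmxSr _ _)).
have eqc : (e *m q == ec)%MS.
  case/andP: eV => a b; case/andP: Ec => c d; case/andP: eVc => x y.
  by rewrite (submx_trans (submxMr _ a) (submx_trans d y))
             (submx_trans x (submx_trans c (submxMr _ b))).
have [hf Ef] := factor hea he fe eaV.
have [hg Eg] := factor (hom_comp he hq) hec fec (proj1 (andP eqc)).
set f := ea *m pinvmx e in hf Ef *.
set g := e *m q *m pinvmx ec in hg Eg *.
split=> //.
- by apply: (@free_of_mul _ _ _ _ f e); rewrite Ef.
- exact: full_of_fact fec Eg (proj2 (andP eqc)).
apply/andP; split.
  apply/sub_kermxP; apply/eqP; rewrite -(mulmx_free_eq0 _ fec).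
  by rewrite -mulmxA Eg mulmxA Ef; apply/eqP/sub_kermxP.
set K := kermx g.
have K0 : K *m g = 0 by rewrite mulmx_ker.
have Ke : (K *m e <= ea)%MS.
  have h1 : (K *m e <= kermx q)%MS.
    by apply/sub_kermxP; rewrite -mulmxA -Eg mulmxA K0 mul0mx.
  have h2 : (K *m e <= V)%MS by case/andP: eV => a _; exact: submx_trans (submxMl _ _) a.
  case/andP: Ea => _ b; case/andP: eVa => _ c.
  by apply: submx_trans c; apply: submx_trans b; rewrite sub_capmx h1 h2.
have /submxP[D hD] := Ke.
have -> : K = D *m f.
  by apply: (row_free_inj fe); rewrite hD -mulmxA Ef.
exact: submxMl.
Qed.

Lemma ext_G (M N : rmod) k (V : 'M[F]_(k, rdim M)) (q : 'M[F]_(rdim M, rdim N)) :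
  valid M -> valid N -> is_hom q -> stab V ->
  sub_in G (V :&: kermx q)%MS -> sub_in G (V *m q) -> sub_in G V.
Proof.
move=> vM vN hq sV [A [ea [ra GA]]] [C [ec [rc GC]]].
have [X [e re]] := sub_exists vM sV.
exists X, e; split=> //.
case: HG => _ _ hext _.
have vX : valid X by case: re.
apply: (hext _ _ _ _ _ GA GC vX).
exact: ses hq re ra rc (mxeq_refl _) (mxeq_refl _).
Qed.


Lemma sub_from (X M : rmod) (e : 'M[F]_(rdim X, rdim M)) k (U : 'M[F]_(k, rdim X)) :
  is_hom e -> row_free e -> sub_in G (U *m e) -> sub_in G U.
Proof.
move=> he fe [X0 [e0 [[vX0 he0 fe0 eU0] GX0]]].
have ee : (e0 <= e)%MS.
  by case/andP: eU0 => a _; exact: submx_trans a (submxMl _ _).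
have [hg E] := factor he0 he fe ee.
exists X0, (e0 *m pinvmx e); split=> //; split=> //.
- by apply: (@free_of_mul _ _ _ _ _ e); rewrite E.
apply/eqmxP; apply: (eqmxMfree fe); apply/eqmxP; rewrite E //.
Qed.

Lemma strict_from_sub (X M : rmod) (e : 'M[F]_(rdim X, rdim M)) k (U : 'M[F]_(k, rdim X)) :
  valid M -> is_hom e -> row_free e -> sub_in G (U *m e) ->
  (forall k' (D : 'M[F]_(k', rdim M)), sub_in G D -> (D <= e)%MS ->
      sub_in G ((U *m e) :&: D)%MS) ->
  strict_sub G U.
Proof.
move=> vM he fe sU h; split; first exact: sub_from he fe sU.
move=> k' B' sB; apply: (sub_from he fe).
apply: sub_eq (mxeq_sym (cap_free _ _ fe)) _.
exact: h (img_G vM he sB) (submxMl _ _).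
Qed.

Lemma strict_img (M N : rmod) (f : 'M[F]_(rdim M, rdim N)) k (W : 'M[F]_(k, rdim M)) :
  valid N -> is_hom f -> sub_in G W ->
  (forall k' (C : 'M[F]_(k', rdim N)), sub_in G C -> sub_in G (W :&: pre f C)%MS) ->
  strict_sub G (W *m f).
Proof.
move=> vN hf sW h; split; first exact: img_G vN hf sW.
move=> k' C sC; rewrite capmxC; apply: sub_eq (img_cap f C W) _.
by apply: img_G vN hf _; rewrite capmxC; exact: h.
Qed.

Lemma pre_G (M Y : rmod) (p : 'M[F]_(rdim M, rdim Y)) k (D : 'M[F]_(k, rdim Y)) :
  valid M -> valid Y -> is_hom p -> sub_in G (kermx p) -> (D <= p)%MS ->
  sub_in G D -> sub_in G (pre p D).
Proof.
move=> vM vY hp sK Dp sD.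
apply: (ext_G vM vY hp).
- exact: stab_pre (sub_in_stab sD) hp.
- apply: sub_eq sK; apply/andP; split.
    by rewrite sub_capmx ker_pre submx_refl.
  exact: capmxSr.
- exact: sub_eq (mxeq_sym (pre_imgE Dp)) sD.
Qed.

Lemma strict_from_quot (M Y : rmod) (p : 'M[F]_(rdim M, rdim Y)) k (D : 'M[F]_(k, rdim Y)) :
  valid M -> valid Y -> is_hom p -> row_full p -> sub_in G (kermx p) ->
  sub_in G (pre p D) ->
  (forall k' (C : 'M[F]_(k', rdim M)), sub_in G C -> sub_in G (pre p D :&: C)%MS) ->
  strict_sub G D.
Proof.
move=> vM vY hp fp sK sD h; split.
  exact: sub_eq (pre_imgE (submx_full _ fp)) (img_G vY hp sD).
move=> k' B' sB.
apply: sub_eq (pre_imgE (submx_full _ fp)) _; apply: (img_G vY hp).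
apply: sub_eq (mxeq_sym (pre_cap _ _ _)) _.
exact: h (pre_G vM vY hp sK (submx_full _ fp) sB).
Qed.

Lemma pre1 (M N : rmod) (phi : 'M[F]_(rdim M, rdim N)) k1 k2
  (B : 'M[F]_(k1, rdim M)) (W : 'M[F]_(k2, rdim N)) :
  valid M -> valid N -> is_hom phi -> strict_sub G (kermx phi) ->
  sub_in G B -> sub_in G W -> sub_in G (W :&: B *m phi)%MS ->
  sub_in G (B :&: pre phi W)%MS.
Proof.
move=> vM vN hf sK sB sW sWB.
apply: (ext_G vM vN hf).
- exact: stab_cap (sub_in_stab sB) (stab_pre (sub_in_stab sW) hf).
- apply: sub_eq (proj2 sK _ _ sB) => /=.
  apply/andP; split.
    rewrite !sub_capmx capmxSr capmxSl /= andbT.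
    exact: submx_trans (capmxSl _ _) (ker_pre _ _).
  rewrite sub_capmx capmxSr /=.
  exact: submx_trans (capmxSl _ _) (capmxSl _ _).
- rewrite capmxC; apply: sub_eq sWB; exact: mxeq_sym (img_cap _ _ _).
Qed.

Lemma pre2 (M N : rmod) (phi : 'M[F]_(rdim M, rdim N)) k1 k2
  (U : 'M[F]_(k1, rdim M)) (C : 'M[F]_(k2, rdim N)) :
  strict_morphism G phi -> strict_sub G U -> sub_in G C ->
  sub_in G (U :&: pre phi C)%MS.
Proof.
move=> [GM GN hf sK sI] sU sC.
have vM := Gvalid GM; have vN := Gvalid GN.
have E : (pre phi (C :&: phi) == pre phi C)%MS.
  apply/andP; split; first by apply: pre_mono; exact: capmxSl.
  by rewrite sub_pre sub_capmx -sub_pre submx_refl submxMl.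
have : sub_in G (pre phi (C :&: phi)%MS).
  apply: (ext_G vM vN hf).
  - apply: (stab_pre _ hf); apply: (stab_cap (sub_in_stab sC) (stab_hom hf)).
  - apply: sub_eq (proj1 sK); apply/andP; split.
      by rewrite sub_capmx ker_pre submx_refl.
    exact: capmxSr.
  - apply: sub_eq (mxeq_sym (pre_imgE (capmxSr _ _))) _.
    by rewrite capmxC; apply: (proj2 sI).
move=> h; apply: sub_eq (proj2 sU _ _ h).
by case/andP: E => a b; rewrite !capmxS ?submx_refl.
Qed.

End GLemmas.

Lemma capD (F : fieldType) n k1 k2 k3 (A : 'M[F]_(k1, n)) (X : 'M[F]_(k2, n)) (D : 'M[F]_(k3, n)) :
  (D <= A)%MS -> ((A :&: X) :&: D == D :&: X)%MS.
Proof.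
move=> DA; apply/andP; split.
  rewrite sub_capmx capmxSr /=; exact: submx_trans (capmxSl _ _) (capmxSr _ _).
rewrite !sub_capmx capmxSl /= andbT capmxSr andbT.
exact: submx_trans (capmxSl _ _) DA.
Qed.

Lemma cap_eq2 (F : fieldType) n k1 k2 k3 k4 (A : 'M[F]_(k1, n)) (A' : 'M[F]_(k2, n))
   (B : 'M[F]_(k3, n)) (B' : 'M[F]_(k4, n)) :
  (A == A')%MS -> (B == B')%MS -> (A :&: B == A' :&: B')%MS.
Proof. by case/andP=> a b /andP[c d]; rewrite !capmxS. Qed.

Lemma kermx_free (F : fieldType) m n p (g : 'M[F]_(m, n)) (e : 'M[F]_(n, p)) :
  row_free e -> (kermx (g *m e) == kermx g)%MS.
Proof.
move=> fe; apply/andP; split.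
  by rewrite sub_kermx -(mulmx_free_eq0 _ fe) -mulmxA mulmx_ker.
by apply/sub_kermxP; rewrite mulmxA mulmx_ker mul0mx.
Qed.

Lemma max_exists (Q : nat -> Prop) n :
  (exists r, Q r) -> (forall r, Q r -> r <= n)%N ->
  exists r, Q r /\ forall r', Q r' -> (r' <= r)%N.
Proof.
elim: n Q => [|n IH] Q [r0 Qr0] hb.
  by exists r0; split=> // r' /hb; have := hb _ Qr0; rewrite !leqn0 => /eqP-> /eqP->.
case: (Classical_Prop.classic (Q n.+1)) => [Qn|nQ].
  by exists n.+1; split=> // r' /hb.
apply: IH; first by exists r0.
move=> r Qr; have := hb _ Qr; rewrite leq_eqVlt => /orP[/eqP E|//].
by rewrite E in Qr.
Qed.

Section Main.
Variables (F : fieldType) (Lam : falgType F) (G P : mclass Lam).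
Hypothesis HG : torsion_class G.
Hypothesis HP : pseudo_torsion G P.
Local Notation rmod := (rmod Lam).

Lemma P_G (X : rmod) : P X -> G X.
Proof. by case: HP => h _ _ _; exact: h. Qed.

Lemma sub_in_PG (M : rmod) k (U : 'M[F]_(k, rdim M)) : sub_in P U -> sub_in G U.
Proof. by move=> [X [e [r pX]]]; exists X, e; split=> //; exact: P_G. Qed.

Lemma sub_in_self (M : rmod) : G M -> sub_in G (1%:M : 'M[F]_(rdim M)).
Proof.
move=> GM; exists M, 1%:M; split=> //; split.
- exact (Gvalid HG GM).
- exact: hom_id.
- by rewrite row_free_unit unitmx1.
- exact: mxeq_refl.
Qed.

Lemma strict_self (M : rmod) : G M -> strict_sub G (1%:M : 'M[F]_(rdim M)).
Proof.
move=> GM; split; first exact: sub_in_self.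
by move=> k B sB; apply: sub_eq sB; rewrite sub_capmx submx1 submx_refl capmxSr.
Qed.

Lemma zero_P : exists Z : rmod, P Z /\ rdim Z = 0%N.
Proof.
case: HP => PG [M0 PM0] pq _.
have vM0 : valid M0 by apply: (Gvalid HG); exact: PG.
have [Y [p [vY hp fp kp]]] := quot_exists vM0 (fun a => submx1 (1%:M *m ract M0 a)).
exists Y; split.
  apply: (pq _ _ p PM0 vY hp fp).
  exact: strict_eq (mxeq_sym kp) (strict_self (PG _ PM0)).
have r : \rank p = rdim Y by apply/eqP.
have := eqmx_rank kp; rewrite mxrank_ker mxrank1.
have := rank_leq_row p; lia.
Qed.

Lemma sub0_P (M : rmod) : sub_in P (0 : 'M[F]_(rdim M)).
Proof.
have [Z [PZ rZ]] := zero_P.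
exists Z, 0; split=> //; split.
- by apply: (Gvalid HG); exact: P_G.
- by move=> a; rewrite mul0mx mulmx0.
- by rewrite /row_free mxrank0 rZ.
- by rewrite !sub0mx.
Qed.

Lemma strict0 (M : rmod) : strict_sub G (0 : 'M[F]_(rdim M)).
Proof.
split; first exact: sub_in_PG (sub0_P M).
move=> k B sB; apply: sub_eq (sub_in_PG (sub0_P M)).
by rewrite sub0mx capmxSl.
Qed.


Lemma exist_tp (M : rmod) : G M -> exists T : 'M[F]_(rdim M), torsion_part G P T.
Proof.
move=> GM; have vM := Gvalid HG GM.
case: (HP) => PG _ pq pext.
pose Q r := exists T : 'M[F]_(rdim M), [/\ strict_sub G T, sub_in P T & \rank T = r].
have Q0 : exists r, Q r by exists 0%N, 0; split; [exact: strict0 | exact: sub0_P | exact: mxrank0].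
have Qb : forall r, Q r -> (r <= rdim M)%N.
  by move=> r [T [_ _ <-]]; exact: rank_leq_col.
have [r [[T [sT pT rT]] hmax]] := max_exists Q0 Qb.
have sTs := sub_in_stab (proj1 sT).
have [Y [p [vY hp fp kp]]] := quot_exists vM sTs.
exists T; split=> //; exists Y, p; split; first by split.
split; first exact: (Gquot HG GM vY hp fp).
move=> A phi PA smphi; case: (eqVneq phi 0) => // nz; exfalso.
case: (smphi) => GA _ hphi sKphi sIphi.
have sK : sub_in G (kermx p) by exact: sub_eq (mxeq_sym kp) (proj1 sT).
have Tk : (T <= kermx p)%MS by case/andP: kp.
have kT : (kermx p <= T)%MS by case/andP: kp.
pose I := pre p phi.
have TI : (T <= I)%MS by exact: submx_trans Tk (ker_pre _ _).
have stI : stab I by exact: stab_pre (sub_in_stab (proj1 sIphi)) hp.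
have sI : strict_sub G I.
  split; first exact: (pre_G HG vM vY hp sK (submx_full _ fp) (proj1 sIphi)).
  move=> k' B' sB; apply: (ext_G HG vM vY hp).
  - exact: stab_cap stI (sub_in_stab sB).
  - apply: sub_eq (proj2 sT _ _ sB); apply/andP; split.
      rewrite !sub_capmx capmxSr /= andbT.
      by rewrite (submx_trans (capmxSl _ _) TI) (submx_trans (capmxSl _ _) Tk).
    rewrite sub_capmx (submx_trans (capmxSr _ _) kT) /=.
    exact: submx_trans (capmxSl _ _) (capmxSr _ _).
  - apply: sub_eq (mxeq_sym (img_cap p phi B')) _.
    exact: (proj2 sIphi _ _ (img_G HG vY hp sB)).
have pI : sub_in P I.
  have [XI [eI rI]] := sub_exists vM stI.
  have GXI := G_of_real HG rI (proj1 sI).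
  case: (pT) => A0 [e0 [r0 PA0]].
  have [Z [ez rz]] := sub_exists vY (stab_hom hphi).
  case: (rz) => vZ hez fez eqz.
  have [hg Eg] := factor hphi hez fez (proj2 (andP eqz)).
  have PZ : P Z.
    apply: (pq _ _ _ PA vZ hg).
      exact: full_of_fact fez Eg (proj1 (andP eqz)).
    apply: (strict_eq _ sKphi); have := kermx_free (phi *m pinvmx ez) fez.
    by rewrite Eg.
  case: (rI) => vXI heI feI eqI.
  case: (r0) => vA0 he0 fe0 eq0.
  have e0I : (e0 <= eI)%MS.
    case/andP: eq0 => a _; case/andP: eqI => _ b.
    exact: submx_trans a (submx_trans TI b).
  have [hf Ef] := factor he0 heI feI e0I.
  have PXI : P XI.
    apply: (pext _ _ _ _ _ PA0 PZ); split.
    - exact: P_G.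
    - exact: GXI.
    - exact: P_G.
    - apply: (ses hp rI r0 rz).
        apply/andP; split; first by rewrite sub_capmx TI Tk.
        exact: submx_trans (capmxSr _ _) kT.
      exact: mxeq_sym (pre_imgE (submx_full _ fp)).
    - apply: (strict_from_sub HG vM heI feI).
        rewrite Ef; exact: sub_eq (mxeq_sym eq0) (proj1 sT).
      move=> k' D sD DI; rewrite Ef.
      exact: sub_eq (cap_eql _ (mxeq_sym eq0)) (proj2 sT _ _ sD).
  by exists XI, eI; split.
have rIT : (\rank I <= r)%N by apply: hmax; exists I; split.
have := mxrank_leqif_eq TI; move/geq_leqif; rewrite rT rIT => /esym TeI.
have Ip : I *m p = 0.
  by apply/sub_kermxP; case/andP: TeI => _ b; exact: submx_trans b Tk.
move/eqP: nz; apply; apply/eqP; rewrite -submx0.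
have h := pre_imgE (submx_full phi fp); rewrite -/I Ip in h.
exact: submx_trans (proj2 (andP h)) (sub0mx _ _).
Qed.


Lemma le_tp (M : rmod) k1 k2 (U : 'M[F]_(k1, rdim M)) (V : 'M[F]_(k2, rdim M)) :
  valid M -> torsion_part G P U -> torsion_part G P V -> (V <= U)%MS.
Proof.
move=> vM [sU _ [Y [p [[vY hp fp kp] [GY perpY]]]]] [sV [A [ea [[vA hea fea eVa] PA]]] _].
have sK : sub_in G (kermx p) by exact: sub_eq (mxeq_sym kp) (proj1 sU).
have sea : sub_in G ea by exact: sub_eq (mxeq_sym eVa) (proj1 sV).
have kU : (kermx p <= U)%MS by case/andP: kp.
have Uk : (U <= kermx p)%MS by case/andP: kp.
have psi0 : ea *m p = 0.
  apply: (perpY _ _ PA); split.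
  - exact: P_G.
  - exact: GY.
  - exact: hom_comp.
  - apply: (strict_from_sub HG vM hea fea).
      apply: sub_eq (proj2 sU _ _ (proj1 sV)).
      apply: mxeq_trans _ (mxeq_sym (ker_comp _ _)).
      rewrite capmxC; exact: cap_eq2 (mxeq_sym eVa) (mxeq_sym kp).
    move=> k' D sD De.
    apply: sub_eq (proj2 sU _ _ sD).
    apply: mxeq_trans _ (cap_eql _ (mxeq_sym (ker_comp _ _))).
    apply: mxeq_trans _ (mxeq_sym (capD _ De)).
    rewrite capmxC; exact: cap_eq2 (mxeq_refl _) (mxeq_sym kp).
  - apply: (strict_img HG vY hp sea) => k' C sC.
    apply: sub_eq (cap_eql _ (mxeq_sym eVa)) _.
    exact: (proj2 sV _ _ (pre_G HG vM vY hp sK (submx_full _ fp) sC)).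
have : (ea <= kermx p)%MS by apply/sub_kermxP.
case/andP: eVa => _ b a.
exact: submx_trans b (submx_trans a kU).
Qed.


Lemma func_le (M N : rmod) (phi : 'M[F]_(rdim M, rdim N)) kU kV
  (U : 'M[F]_(kU, rdim M)) (V : 'M[F]_(kV, rdim N)) :
  strict_morphism G phi -> torsion_part G P U -> torsion_part G P V ->
  (U *m phi <= V)%MS.
Proof.
move=> smphi [sU [A [ea [[vA hea fea eUa] PA]]] _] [sV _ [Y' [p' [[vY' hp' fp' kp'] [GY' perpY']]]]].
case: (smphi) => GM GN hphi sKphi sIphi.
have vM := Gvalid HG GM; have vN := Gvalid HG GN.
have sK' : sub_in G (kermx p') by exact: sub_eq (mxeq_sym kp') (proj1 sV).
have sea : sub_in G ea by exact: sub_eq (mxeq_sym eUa) (proj1 sU).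
have kpre : (kermx (phi *m p') == pre phi V)%MS by exact: ker_pre_comp.
have psi0 : ea *m (phi *m p') = 0.
  apply: (perpY' _ _ PA); split.
  - exact: P_G.
  - exact: GY'.
  - exact: hom_comp hea (hom_comp hphi hp').
  - apply: (strict_from_sub HG vM hea fea).
      apply: sub_eq (pre1 HG vM vN hphi sKphi (proj1 sU) (proj1 sV)
                          (proj2 sV _ _ (img_G HG vN hphi (proj1 sU)))).
      apply: mxeq_trans _ (mxeq_sym (ker_comp _ _)).
      exact: cap_eq2 (mxeq_sym eUa) (mxeq_sym kpre).
    move=> k' D sD De.
    apply: sub_eq (pre1 HG vM vN hphi sKphi sD (proj1 sV)
                        (proj2 sV _ _ (img_G HG vN hphi sD))).
    apply: mxeq_trans _ (cap_eql _ (mxeq_sym (ker_comp _ _))).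
    apply: mxeq_trans _ (mxeq_sym (capD _ De)).
    exact: cap_eq2 (mxeq_refl _) (mxeq_sym kpre).
  - rewrite mulmxA; apply: (strict_img HG vY' hp' (img_G HG vN hphi sea)) => k' C sC.
    have sC0 := pre_G HG vN vY' hp' sK' (submx_full _ fp') sC.
    have h := pre2 HG smphi (strict_eq (mxeq_sym eUa) sU) sC0.
    have h2 := img_G HG vN hphi h.
    rewrite capmxC in h2.
    apply: (sub_eq _ h2); rewrite [X in (_ == X)%MS]capmxC; exact: img_cap.
have : (ea *m phi <= kermx p')%MS by apply/sub_kermxP; rewrite -mulmxA.
case/andP: eUa => _ b a; case/andP: kp' => c _.
exact: submx_trans (submxMr _ b) (submx_trans a c).
Qed.


Lemma func_maps (M N : rmod) (phi : 'M[F]_(rdim M, rdim N)) kU kV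
  (U : 'M[F]_(kU, rdim M)) (V : 'M[F]_(kV, rdim N))
  (X X' Y Y' : rmod)
  (e : 'M[F]_(rdim X, rdim M)) (e' : 'M[F]_(rdim X', rdim N))
  (p : 'M[F]_(rdim M, rdim Y)) (p' : 'M[F]_(rdim N, rdim Y')) :
  strict_morphism G phi -> torsion_part G P U -> torsion_part G P V ->
  sub_real U e -> sub_real V e' -> quot_real U p -> quot_real V p' ->
  exists (alpha : 'M[F]_(rdim X, rdim X')) (beta : 'M[F]_(rdim Y, rdim Y')),
    [/\ strict_morphism G alpha, strict_morphism G beta,
        alpha *m e' = e *m phi & p *m beta = phi *m p'].
Proof.
move=> smphi tU tV re re' rp rp'.
have UV := func_le smphi tU tV.
case: tU => sU _ _; case: tV => sV _ _.
case: (smphi) => GM GN hphi sKphi sIphi.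
have vM := Gvalid HG GM; have vN := Gvalid HG GN.
case: (re) => vX he fe eU; case: (re') => vX' he' fe' eV.
case: (rp) => vY hp fp kp; case: (rp') => vY' hp' fp' kp'.
have sK : sub_in G (kermx p) by exact: sub_eq (mxeq_sym kp) (proj1 sU).
have sK' : sub_in G (kermx p') by exact: sub_eq (mxeq_sym kp') (proj1 sV).
have se : sub_in G e by exact: sub_eq (mxeq_sym eU) (proj1 sU).
have ephi : (e *m phi <= e')%MS.
  case/andP: eU => a _; case/andP: eV => _ b.
  exact: submx_trans (submxMr _ a) (submx_trans UV b).
have [ha Ea] := factor (hom_comp he hphi) he' fe' ephi.
set alpha := e *m phi *m pinvmx e' in ha Ea *.
set beta := pinvmx p *m phi *m p'.
have Eb : p *m beta = phi *m p'.
  have s1 : ((1%:M - p *m pinvmx p) <= kermx p)%MS.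
    by apply/sub_kermxP; rewrite mulmxBl mul1mx mulmxKpV // subrr.
  have s2 : ((1%:M - p *m pinvmx p) *m phi <= kermx p')%MS.
    case/andP: kp => k1 _; case/andP: kp' => _ k2.
    exact: submx_trans (submxMr _ (submx_trans s1 k1)) (submx_trans UV k2).
  move/sub_kermxP: s2; rewrite mulmxBl mul1mx mulmxBl => /eqP.
  by rewrite subr_eq0 => /eqP E; rewrite /beta 2!mulmxA -E.
have hb : is_hom beta.
  move=> a; apply: (row_full_inj fp).
  rewrite mulmxA -hp -mulmxA Eb mulmxA hphi -mulmxA hp'.
  by rewrite [RHS]mulmxA Eb mulmxA.
have GX := G_of_real HG re (proj1 sU).
have GX' := G_of_real HG re' (proj1 sV).
have GY := Gquot HG GM vY hp fp.
have GY' := Gquot HG GN vY' hp' fp'.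
exists alpha, beta; split=> //.
- split=> //.
  + have Ka : (kermx alpha *m e == e :&: kermx phi)%MS.
      apply: mxeq_trans _ (ker_comp e phi).
      have := kermx_free alpha fe'; rewrite Ea => h.
      by case/andP: h => a b; rewrite !submxMr.
    apply: (strict_from_sub HG vM he fe).
      apply: sub_eq (proj2 sKphi _ _ se).
      by apply: mxeq_sym; apply: mxeq_trans Ka _; rewrite capmxC mxeq_refl.
    move=> k' D sD De.
    apply: sub_eq (proj2 sKphi _ _ sD).
    apply: mxeq_trans _ (cap_eql _ (mxeq_sym Ka)).
    apply: mxeq_trans _ (mxeq_sym (capD _ De)).
    by rewrite capmxC mxeq_refl.
  + apply: (strict_from_sub HG vN he' fe').
      by rewrite Ea; exact (img_G HG vN hphi se).
    move=> k' D sD De; rewrite Ea.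
    have h := img_G HG vN hphi (pre2 HG smphi (strict_eq (mxeq_sym eU) sU) sD).
    rewrite capmxC in h.
    apply: (sub_eq _ h); rewrite [X in (_ == X)%MS]capmxC; exact: img_cap.
- split=> //.
  + have Kb : (pre p (kermx beta) == pre phi V)%MS.
      apply: (mxeq_trans (mxeq_sym (ker_pre_comp p (mxeq_refl (kermx beta))))) .
      by rewrite Eb; exact: ker_pre_comp.
    apply: (strict_from_quot HG vM vY hp fp sK).
      apply: sub_eq (mxeq_sym Kb) _.
      have h := pre1 HG vM vN hphi sKphi (sub_in_self GM) (proj1 sV)
                  (proj2 sV _ _ (img_G HG vN hphi (sub_in_self GM))).
      apply: (sub_eq _ h); apply/andP; split; first exact: capmxSr.
      by rewrite sub_capmx submx1 submx_refl.
    move=> k' C sC.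
    have h := pre1 HG vM vN hphi sKphi sC (proj1 sV)
                (proj2 sV _ _ (img_G HG vN hphi sC)).
    apply: (sub_eq _ h); rewrite [X in (_ == X)%MS]capmxC.
    exact: cap_eq2 (mxeq_refl _) (mxeq_sym Kb).
  + have E : (phi *m p' == beta)%MS by rewrite -Eb; apply/eqmxP; exact: eqmxMfull.
    apply: (strict_eq E); apply: (strict_img HG vY' hp' (proj1 sIphi)) => k' C sC.
    exact: (proj2 sIphi _ _ (pre_G HG vN vY' hp' sK' (submx_full _ fp') sC)).
Qed.

End Main.

Unset Implicit Arguments.
Set Strict Implicit.

Theorem mainTheorem9 (F : fieldType) (Lam : falgType F) (G P : mclass Lam) :
  torsion_class G -> pseudo_torsion G P ->
  (* existence and uniqueness of tM, and strict exactness of 0 -> tM -> M -> fM -> 0 *)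
  (forall M : rmod Lam, G M ->
     exists U : 'M[F]_(rdim M),
       torsion_part G P U /\
       (forall k (V : 'M[F]_(k, rdim M)), torsion_part G P V -> (V == U)%MS) /\
       (forall (X Y : rmod Lam) (e : 'M[F]_(rdim X, rdim M)) (p : 'M[F]_(rdim M, rdim Y)),
          sub_real U e -> quot_real U p -> strict_exact G e p)) /\
  (* functoriality *)
  (forall (M N : rmod Lam) (phi : 'M[F]_(rdim M, rdim N)),
     strict_morphism G phi ->
     forall kU kV (U : 'M[F]_(kU, rdim M)) (V : 'M[F]_(kV, rdim N)),
     torsion_part G P U -> torsion_part G P V ->
     (U *m phi <= V)%MS /\
     forall (X X' Y Y' : rmod Lam)
            (e : 'M[F]_(rdim X, rdim M)) (e' : 'M[F]_(rdim X', rdim N))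
            (p : 'M[F]_(rdim M, rdim Y)) (p' : 'M[F]_(rdim N, rdim Y')),
       sub_real U e -> sub_real V e' -> quot_real U p -> quot_real V p' ->
       exists (alpha : 'M[F]_(rdim X, rdim X')) (beta : 'M[F]_(rdim Y, rdim Y')),
         [/\ strict_morphism G alpha, strict_morphism G beta,
             alpha *m e' = e *m phi & p *m beta = phi *m p']).
Proof.
move=> HG HP; split.
  move=> M GM; have vM := Gvalid HG GM.
  have [T tT] := exist_tp HG HP GM.
  exists T; split=> //; split.
    by move=> k V tV; rewrite (le_tp HG HP vM tT tV) (le_tp HG HP vM tV tT).
  move=> X Y e p re rp.
  case: (tT) => sT _ _; case: (re) => vX he fe eT; case: (rp) => vY hp fp kp.
  split.
  - exact (G_of_real HG re (proj1 sT)).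
  - exact: GM.
  - exact (Gquot HG GM vY hp fp).
  - by split=> //; exact: mxeq_trans eT (mxeq_sym kp).
  - exact: strict_eq (mxeq_sym eT) sT.
move=> M N phi smphi kU kV U V tU tV; split; first exact (func_le HG HP smphi tU tV).
move=> X X' Y Y' e e' p p' re re' rp rp'.
exact (func_maps HG HP smphi tU tV re re' rp rp').
Qed.
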